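(* Let $G$ act on a simplicial tree $T$ and let $h\in G$ be hyperbolic. For $\lambda>0$ consider the conditions: $FS(\lambda)$: every element of $G$ fixing a subsegment of $A(h)$ of length greater than $\lambda\,tl(h)$ fixes $A(h)$ pointwise; $AI(\lambda)$: for every hyperbolic $g\in G$ with $tl(g)\le tl(h)$, either $|A(g)\cap A(h)|\le\lambda\,tl(h)$ or $g\in E(h)$; $WS(\lambda)$: $h$ is weakly $\lambda$-stable. Then $FS(\lambda)$ implies both $AI(\lambda+2)$ and $WS(\lambda+2)$, and $WS(\lambda)$ implies $FS(\lambda)$.
   Context: $tl(g)=\inf_p d(p,gp)$; $A(h)$ is the translation axis of hyperbolic $h$; $E(h)$ is the set of elements of $G$ preserving $A(h)$ setwise. $h$ is weakly $\lambda$-stable if for all $g\in G$, $|A(h)\cap gA(h)|>\lambda tl(h)$ implies $g\in E(h)$. *)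

(* Defs.v *)
From Stdlib Require Import Reals List Arith Lia ClassicalEpsilon.
Import ListNotations.
Open Scope R_scope.

Section Graphs.
Variable V : Type.
Variable adj : V -> V -> Prop.

Fixpoint chain (x : V) (l : list V) : Prop :=
  match l with
  | nil => True
  | y :: l' => adj x y /\ chain y l'
  end.

Definition walk (x y : V) (n : nat) : Prop :=
  exists l : list V, chain x l /\ last l x = y /\ length l = n.

Definition has_cycle : Prop :=
  exists (x : V) (l : list V),
    (2 <= length l)%nat /\ NoDup (x :: l) /\ chain x l /\ adj (last l x) x.
End Graphs.

Record Tree := mkTree {
  vert : Type;
  adj : vert -> vert -> Prop;
  adj_sym : forall x y, adj x y -> adj y x;
  adj_irrefl : forall x, ~ adj x x;
  tree_connected : forall x y : vert, exists n, @walk vert adj x y n;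
  tree_acyclic : ~ @has_cycle vert adj
}.

Definition dist {T : Tree} (x y : vert T) : nat :=
  epsilon (inhabits 0%nat)
    (fun n => @walk (vert T) (adj T) x y n /\ forall m, @walk (vert T) (adj T) x y m -> (n <= m)%nat).

Record TreeAction (T : Tree) := mkTreeAction {
  grp : Type;
  g1 : grp;
  gmul : grp -> grp -> grp;
  ginv : grp -> grp;
  gmulA : forall a b c, gmul a (gmul b c) = gmul (gmul a b) c;
  gmul1l : forall a, gmul g1 a = a;
  gmulVl : forall a, gmul (ginv a) a = g1;
  act : grp -> vert T -> vert T;
  act1 : forall x, act g1 x = x;
  actM : forall a b x, act (gmul a b) x = act a (act b x);
  act_adj : forall a x y, adj T x y <-> adj T (act a x) (act a y)
}.

Arguments grp {T}.
Arguments act {T} _ _ _.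

Section Action.
Variable T : Tree.
Variable Ga : TreeAction T.

Definition tl (g : grp Ga) : nat :=
  epsilon (inhabits 0%nat)
    (fun t => (exists p, dist p (act Ga g p) = t) /\
              forall p, (t <= dist p (act Ga g p))%nat).

(* hyperbolic: fixes no point of the geometric realization, i.e. fixes no
   vertex and inverts no edge *)
Definition hyperbolic (g : grp Ga) : Prop :=
  (forall p, act Ga g p <> p) /\
  ~ (exists x y, adj T x y /\ act Ga g x = y /\ act Ga g y = x).

Definition axis (g : grp Ga) (p : vert T) : Prop := dist p (act Ga g p) = tl g.

Definition inE (h g : grp Ga) : Prop :=
  forall p, axis h p <-> axis h (act Ga g p).

Definition translate_axis (g h : grp Ga) (q : vert T) : Prop :=
  exists p, axis h p /\ q = act Ga g p.

Definition on_segment (x y z : vert T) : Prop :=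
  (dist x z + dist z y = dist x y)%nat.

(* length of A ∩ B (a convex set) exceeds L, i.e. its diameter exceeds L *)
Definition inter_length_gt (A B : vert T -> Prop) (L : R) : Prop :=
  exists x y, A x /\ B x /\ A y /\ B y /\ INR (dist x y) > L.

Definition inter_length_le (A B : vert T -> Prop) (L : R) : Prop :=
  forall x y, A x -> B x -> A y -> B y -> INR (dist x y) <= L.

Definition FS (h : grp Ga) (lam : R) : Prop :=
  forall g : grp Ga,
    (exists x y, axis h x /\ axis h y /\
       INR (dist x y) > lam * INR (tl h) /\
       (forall z, on_segment x y z -> act Ga g z = z)) ->
    forall p, axis h p -> act Ga g p = p.

Definition AI (h : grp Ga) (lam : R) : Prop :=
  forall g : grp Ga, hyperbolic g -> (tl g <= tl h)%nat ->
    inter_length_le (axis g) (axis h) (lam * INR (tl h)) \/ inE h g.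

Definition WS (h : grp Ga) (lam : R) : Prop :=
  forall g : grp Ga,
    inter_length_gt (axis h) (translate_axis g h) (lam * INR (tl h)) -> inE h g.
End Action.

Arguments tl {T} Ga g.
Arguments hyperbolic {T} Ga g.
Arguments FS {T} Ga h lam.
Arguments AI {T} Ga h lam.
Arguments WS {T} Ga h lam.

(* Main.v *)
Require Import Defs.
From Stdlib Require Import Reals List Arith Lia Lra ZArith Classical ClassicalEpsilon.
Require Import Defs.
Import ListNotations.
Local Open Scope nat_scope.

Lemma min_exists (P : nat -> Prop) : (exists n, P n) -> exists n, P n /\ forall m, P m -> n <= m.
Proof.
  intros [n0 H0]. induction n0 as [n0 IH] using lt_wf_ind.
  destruct (classic (exists m, m < n0 /\ P m)) as [[m [Hm Pm]]|Hn].
  - exact (IH m Hm Pm).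
  - exists n0. split; auto. intros m Pm.
    destruct (le_lt_dec n0 m); auto. exfalso; apply Hn; eauto.
Qed.

Section Tr.
Variable T : Tree.
Notation V := (vert T).
Notation A := (adj T).

Definition path (f : nat -> V) n := forall i, i < n -> A (f i) (f (S i)).

Lemma last_cons (a : V) l d : last (a :: l) d = last l a.
Proof. revert a d. induction l as [|x l IH]; intros a d. reflexivity. change (last (x::l) d = last (x::l) a). rewrite !IH. reflexivity. Qed.

Lemma chain_map (f : nat -> V) k : forall s,
  (forall i, s <= i -> i < s + k -> A (f i) (f (S i))) ->
  chain V A (f s) (map f (seq (S s) k)).
Proof.
  induction k; intros s H; simpl; auto.
  split. apply H; lia. apply IHk. intros; apply H; lia.
Qed.

Lemma last_map (f : nat -> V) k : forall s, last (map f (seq (S s) k)) (f s) = f (s + k).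
Proof.
  induction k; intros s. simpl. f_equal; lia.
  cbn [seq map]. rewrite last_cons. rewrite IHk. f_equal; lia.
Qed.

Lemma walk_of_path f n : path f n -> walk V A (f 0) (f n) n.
Proof.
  intros H. exists (map f (seq 1 n)). split; [|split].
  - apply chain_map. intros; apply H; lia.
  - apply last_map.
  - rewrite length_map, length_seq; auto.
Qed.

Lemma path_of_walk x y n : walk V A x y n -> exists f, f 0 = x /\ f n = y /\ path f n.
Proof.
  intros [l [Hc [Hl Hn]]]. revert x n Hc Hl Hn. induction l as [|a l IH]; intros x n Hc Hl Hn.
  - simpl in *. subst. exists (fun _ => y). split; [auto|split; [auto|]]. intros i Hi; lia.
  - simpl in Hn. destruct Hc as [Ha Hc]. rewrite last_cons in Hl.
    destruct (IH a (length l) Hc Hl eq_refl) as [f [F0 [Fn Fp]]].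
    exists (fun i => match i with 0 => x | S j => f j end). subst n. split; auto. split; auto.
    intros [|i] Hi. simpl. rewrite F0; auto. apply Fp; lia.
Qed.

Definition concat (f : nat -> V) a (g : nat -> V) := fun i => if i <=? a then f i else g (i - a).

Lemma concat_l f a g i : i <= a -> concat f a g i = f i.
Proof. intros; unfold concat. destruct (Nat.leb_spec i a); auto; lia. Qed.
Lemma concat_r f a g i : f a = g 0 -> a <= i -> concat f a g i = g (i - a).
Proof. intros E H; unfold concat. destruct (Nat.leb_spec i a); auto.
  assert (i = a) by lia. subst. rewrite Nat.sub_diag; auto. Qed.

Lemma path_concat f a g b : path f a -> path g b -> f a = g 0 -> path (concat f a g) (a + b).
Proof.
  intros Hf Hg E i Hi.
  destruct (le_lt_dec a i).
  - rewrite !concat_r by (auto; lia). replace (S i - a) with (S (i - a)) by lia. apply Hg; lia.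
  - rewrite !concat_l by lia. apply Hf; lia.
Qed.

Lemma dist_spec (x y : V) : walk V A x y (dist x y) /\ forall m, walk V A x y m -> dist x y <= m.
Proof.
  unfold dist. apply epsilon_spec. apply min_exists. apply tree_connected.
Qed.

Lemma dist_path (x y : V) : exists f, f 0 = x /\ f (dist x y) = y /\ path f (dist x y).
Proof. apply path_of_walk. apply dist_spec. Qed.

Lemma dist_le_path f n : path f n -> dist (f 0) (f n) <= n.
Proof. intros H. apply dist_spec. apply walk_of_path; auto. Qed.

Lemma dist_refl (x : V) : dist x x = 0.
Proof.
  assert (H := dist_le_path (fun _ => x) 0). simpl in H. 
  assert (dist x x <= 0). apply H. intros i Hi; lia. lia.
Qed.

Lemma dist_eq0 (x y : V) : dist x y = 0 -> x = y.
Proof. intros H. destruct (dist_path x y) as [f [F0 [Fn _]]]. rewrite H in Fn. congruence. Qed.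

Lemma dist_sym_le (x y : V) : dist y x <= dist x y.
Proof.
  destruct (dist_path x y) as [f [F0 [Fn Fp]]]. set (n := dist x y) in *.
  assert (H := dist_le_path (fun i => f (n - i)) n). simpl in H.
  rewrite Nat.sub_0_r, Nat.sub_diag in H. rewrite Fn, F0 in H. apply H.
  intros i Hi. apply adj_sym. replace (n - i) with (S (n - S i)) by lia. apply Fp; lia.
Qed.

Lemma dist_sym (x y : V) : dist x y = dist y x.
Proof. apply Nat.le_antisymm; apply dist_sym_le. Qed.

Lemma dist_tri (x y z : V) : dist x z <= dist x y + dist y z.
Proof.
  destruct (dist_path x y) as [f [F0 [Fn Fp]]]. destruct (dist_path y z) as [g [G0 [Gn Gp]]].
  assert (H := dist_le_path _ _ (path_concat f _ g _ Fp Gp ltac:(congruence))).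
  rewrite concat_l in H by lia. rewrite concat_r in H by (congruence || lia).
  replace (dist x y + dist y z - dist x y) with (dist y z) in H by lia. congruence.
Qed.

Lemma adj_dist (x y : V) : A x y -> dist x y = 1.
Proof.
  intros H. assert (H1 := dist_le_path (fun i => match i with 0 => x | _ => y end) 1).
  simpl in H1. assert (dist x y <= 1). apply H1. intros [|i] Hi; [auto|lia].
  assert (dist x y <> 0). intros E. apply dist_eq0 in E. subst. eapply adj_irrefl; eauto. lia.
Qed.

Lemma dist_adj (x y : V) : dist x y = 1 -> A x y.
Proof. intros H. destruct (dist_path x y) as [f [F0 [Fn Fp]]]. rewrite H in *. subst. apply Fp; lia. Qed.

Lemma path_shift f n k : path f n -> k <= n -> path (fun i => f (k + i)) (n - k).
Proof. intros H Hk i Hi. replace (k + S i) with (S (k + i)) by lia. apply H; lia. Qed.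

Lemma path_sub_le f n i j : path f n -> i <= j <= n -> dist (f i) (f j) <= j - i.
Proof.
  intros H Hij. assert (H1 := dist_le_path _ _ (path_shift f j i (fun k Hk => H k ltac:(lia)) ltac:(lia))).
  simpl in H1. rewrite Nat.add_0_r in H1. replace (i + (j - i)) with j in H1 by lia. auto.
Qed.

Definition geod f n := path f n /\ dist (f 0) (f n) = n.

Lemma geod_dist f n : geod f n -> forall i j, i <= j <= n -> dist (f i) (f j) = j - i.
Proof.
  intros [Hp Hd] i j Hij.
  assert (H1 := path_sub_le f n i j Hp Hij).
  assert (H2 := path_sub_le f n 0 i Hp ltac:(lia)).
  assert (H3 := path_sub_le f n j n Hp ltac:(lia)).
  assert (H4 := dist_tri (f 0) (f i) (f n)).
  assert (H5 := dist_tri (f i) (f j) (f n)). lia.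
Qed.

Lemma dist_geod (x y : V) : exists f, f 0 = x /\ f (dist x y) = y /\ geod f (dist x y).
Proof.
  destruct (dist_path x y) as [f [F0 [Fn Fp]]]. exists f. repeat split; auto. congruence.
Qed.


Lemma no_cyc (c : nat -> V) N : 3 <= N -> path c N -> c N = c 0 ->
  (forall i j, i < N -> j < N -> c i = c j -> i = j) -> False.
Proof.
  intros HN Hp Hc Hi. apply (tree_acyclic T).
  exists (c 0), (map c (seq 1 (N - 1))). split; [|split; [|split]].
  - rewrite length_map, length_seq; lia.
  - change (c 0 :: map c (seq 1 (N - 1))) with (map c (0 :: seq 1 (N-1))).
    replace (0 :: seq 1 (N - 1)) with (seq 0 N) by (destruct N; [lia|simpl; f_equal; f_equal; lia]).
    apply NoDup_map_NoDup_ForallPairs; [|apply seq_NoDup].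
    intros i j Hi' Hj'. apply in_seq in Hi', Hj'. apply Hi; lia.
  - apply chain_map. intros; apply Hp; lia.
  - rewrite last_map. rewrite <- Hc. replace N with (S (0 + (N - 1))) at 2 by lia. apply Hp; lia.
Qed.

Lemma arms (P Q : nat -> V) a b : P 0 = Q 0 -> path P a -> path Q b -> A (P a) (Q b) -> 2 <= a + b ->
  (forall i j, i <= a -> j <= a -> P i = P j -> i = j) ->
  (forall i j, i <= b -> j <= b -> Q i = Q j -> i = j) ->
  (forall i j, 0 < i <= a -> 0 < j <= b -> P i <> Q j) -> False.
Proof.
  intros E Hp Hq Hab H2 IP IQ X.
  set (c := fun i => if i <=? a then P i else Q (a + b + 1 - i)).
  assert (CL : forall i, i <= a -> c i = P i). { intros i Hi; unfold c. destruct (Nat.leb_spec i a); auto; lia. }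
  assert (CR : forall i, a < i -> c i = Q (a + b + 1 - i)). { intros i Hi; unfold c. destruct (Nat.leb_spec i a); auto; lia. }
  apply (no_cyc c (a + b + 1)); auto; try lia.
  - intros i Hi. destruct (lt_eq_lt_dec i a) as [[H|H]|H].
    + rewrite !CL by lia. apply Hp; lia.
    + subst. rewrite CL, CR by lia. replace (a + b + 1 - S a) with b by lia. auto.
    + rewrite !CR by lia. apply adj_sym. replace (a + b + 1 - i) with (S (a + b + 1 - S i)) by lia. apply Hq; lia.
  - rewrite CR, CL by lia. replace (a + b + 1 - (a + b + 1)) with 0 by lia. auto.
  - intros i j Hi Hj Hij.
    destruct (le_lt_dec i a), (le_lt_dec j a).
    + rewrite !CL in Hij by lia. apply IP; auto.
    + rewrite CL, CR in Hij by lia. exfalso. destruct i.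
      * rewrite E in Hij. apply IQ in Hij; lia.
      * apply (X (S i) (a + b + 1 - j)); auto; lia.
    + rewrite CR, CL in Hij by lia. exfalso. destruct j.
      * rewrite E in Hij. apply IQ in Hij; lia.
      * apply (X (S j) (a + b + 1 - i)); auto; lia.
    + rewrite !CR in Hij by lia. apply IQ in Hij; lia.
Qed.

Lemma last_common (P Q : nat -> V) m : P 0 = Q 0 ->
  exists k, k <= m /\ P k = Q k /\ forall i, k < i <= m -> P i <> Q i.
Proof.
  intros E. induction m.
  - exists 0. split; auto. split; auto. intros; lia.
  - destruct (classic (P (S m) = Q (S m))) as [H|H].
    + exists (S m). split; auto. split; auto. intros; lia.
    + destruct IHm as [k [Hk [Hk1 Hk2]]]. exists k. split; auto. split; auto.
      intros i Hi. destruct (Nat.eq_dec i (S m)). subst; auto. apply Hk2; lia.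
Qed.

Lemma merge z (P Q : nat -> V) a b m : m <= a -> m <= b -> (a <= m \/ b <= m) -> P 0 = Q 0 ->
  (forall i, i <= a -> dist z (P i) = i) -> (forall j, j <= b -> dist z (Q j) = j) ->
  path P a -> path Q b -> A (P a) (Q b) -> P m <> Q m -> False.
Proof.
  intros Ha Hb Hm E DP DQ Hp Hq Hab Hne.
  destruct (last_common P Q m E) as [k [Hk [Hk1 Hk2]]].
  assert (Hkm : k <> m) by (intro; subst; auto).
  apply (arms (fun i => P (k + i)) (fun i => Q (k + i)) (a - k) (b - k)).
  - rewrite !Nat.add_0_r; auto.
  - apply path_shift; auto; lia.
  - apply path_shift; auto; lia.
  - replace (k + (a - k)) with a by lia. replace (k + (b - k)) with b by lia. auto.
  - lia.
  - intros i j Hi Hj H. apply (f_equal (dist z)) in H. rewrite !DP in H by lia. lia.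
  - intros i j Hi Hj H. apply (f_equal (dist z)) in H. rewrite !DQ in H by lia. lia.
  - intros i j Hi Hj H. assert (H' := f_equal (dist z) H). rewrite DP, DQ in H' by lia.
    assert (i = j) by lia. subst. apply (Hk2 (k + j)); auto; lia.
Qed.

Lemma N1 z (u v : V) : A u v -> dist z u = dist z v -> False.
Proof.
  intros Huv E.
  destruct (dist_geod z u) as [P [P0 [Pn Pg]]]. destruct (dist_geod z v) as [Q [Q0 [Qn Qg]]].
  set (n := dist z u) in *. rewrite <- E in Qn, Qg.
  apply (merge z P Q n n n); auto; try lia.
  - congruence.
  - intros i Hi. rewrite <- P0. rewrite (geod_dist P n Pg 0 i) by lia; lia.
  - intros i Hi. rewrite <- Q0. rewrite (geod_dist Q n Qg 0 i) by lia; lia.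
  - apply Pg. - apply Qg. - congruence.
  - rewrite Pn, Qn. intro Heq; rewrite Heq in Huv; eapply adj_irrefl; eauto.
Qed.

Lemma N2 z (y w1 w2 : V) : A y w1 -> A y w2 -> dist z w1 < dist z y -> dist z w2 < dist z y -> w1 = w2.
Proof.
  intros H1 H2 D1 D2. apply NNPP; intro Hne.
  assert (T1 := dist_tri z w1 y). assert (T2 := dist_tri z w2 y).
  rewrite (adj_dist w1 y) in T1 by (apply adj_sym; auto).
  rewrite (adj_dist w2 y) in T2 by (apply adj_sym; auto).
  destruct (dist_geod z w1) as [P [P0 [Pn Pg]]]. destruct (dist_geod z w2) as [Q [Q0 [Qn Qg]]].
  set (n := dist z w1) in *. assert (E : dist z w2 = n) by lia. rewrite E in Qn, Qg.
  set (P' := fun i => if i <=? n then P i else y).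
  assert (PL : forall i, i <= n -> P' i = P i). { intros i Hi; unfold P'. destruct (Nat.leb_spec i n); auto; lia. }
  assert (PR : P' (S n) = y). { unfold P'. destruct (Nat.leb_spec (S n) n); auto; lia. }
  apply (merge z P' Q (S n) n n); auto; try lia.
  - rewrite PL by lia. congruence.
  - intros i Hi. destruct (Nat.eq_dec i (S n)). rewrite e, PR. lia.
    rewrite PL by lia. rewrite <- P0. rewrite (geod_dist P n Pg 0 i) by lia; lia.
  - intros i Hi. rewrite <- Q0. rewrite (geod_dist Q n Qg 0 i) by lia; lia.
  - intros i Hi. destruct (Nat.eq_dec i n). rewrite e. rewrite PL, PR by lia. rewrite Pn. apply adj_sym; auto.
    rewrite !PL by lia. apply Pg; lia.
  - apply Qg.
  - rewrite PR, Qn. auto.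
  - rewrite PL, Pn, Qn by lia. auto.
Qed.

Lemma pm1 z (u v : V) : A u v -> dist z v = S (dist z u) \/ dist z u = S (dist z v).
Proof.
  intros H. assert (T1 := dist_tri z u v). assert (T2 := dist_tri z v u).
  rewrite (adj_dist u v H) in T1. rewrite (adj_dist v u (adj_sym _ _ _ H)) in T2.
  assert (dist z u <> dist z v) by (intro; eapply N1; eauto). lia.
Qed.

Definition nb (f : nat -> V) n := forall i, i + 2 <= n -> f i <> f (i + 2).

Lemma LG f n : path f n -> nb f n -> forall k, k <= n -> dist (f 0) (f k) = k.
Proof.
  intros Hp Hn.
  assert (forall k, S k <= n -> dist (f 0) (f k) = k /\ dist (f 0) (f (S k)) = S k).
  { induction k; intros Hk.
    - split. apply dist_refl. apply adj_dist, Hp; lia.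
    - destruct IHk as [I1 I2]; [lia|]. split; auto.
      destruct (pm1 (f 0) (f (S k)) (f (S (S k)))) as [H|H]. apply Hp; lia. lia.
      exfalso. apply (Hn k); [lia|]. replace (k + 2) with (S (S k)) by lia.
      apply (N2 (f 0) (f (S k))). apply adj_sym, Hp; lia. apply Hp; lia. lia. lia. }
  intros [|k] Hk. apply dist_refl. apply H; lia.
Qed.

Lemma LG_geod f n : path f n -> nb f n -> geod f n.
Proof. intros Hp Hn. split; auto. apply (LG f n); auto. Qed.

Lemma geod_nb f n : geod f n -> nb f n.
Proof.
  intros G i Hi E. assert (H := geod_dist f n G i (i + 2) ltac:(lia)). rewrite E, dist_refl in H. lia.
Qed.

Lemma nb_concat f a g b : path f a -> path g b -> f a = g 0 -> nb f a -> nb g b ->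
  (1 <= a -> 1 <= b -> f (a - 1) <> g 1) -> nb (concat f a g) (a + b).
Proof.
  intros Pf Pg E Nf Ng J i Hi.
  destruct (le_lt_dec (i + 2) a).
  - rewrite !concat_l by lia. apply Nf; lia.
  - destruct (Nat.eq_dec (i + 1) a).
    + rewrite concat_l, concat_r by (auto; lia). replace i with (a - 1) by lia.
      replace (a - 1 + 2 - a) with 1 by lia. apply J; lia.
    + rewrite !concat_r by (auto; lia). replace (i + 2 - a) with (i - a + 2) by lia. apply Ng; lia.
Qed.

Lemma geod_unique f g n : geod f n -> geod g n -> f 0 = g 0 -> f n = g n -> forall i, i <= n -> f i = g i.
Proof.
  intros Gf Gg E0 En. induction i; intros Hi; auto.
  assert (IH := IHi ltac:(lia)).
  apply (N2 (f n) (f i)).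
  - apply Gf; lia.
  - rewrite IH. apply Gg; lia.
  - rewrite (dist_sym (f n) (f (S i))), (dist_sym (f n) (f i)).
    rewrite (geod_dist f n Gf (S i) n), (geod_dist f n Gf i n); lia.
  - rewrite En, IH. rewrite (dist_sym (g n) (g (S i))), (dist_sym (g n) (g i)).
    rewrite (geod_dist g n Gg (S i) n), (geod_dist g n Gg i n); lia.
Qed.

End Tr.

Section Act.
Variable T : Tree.
Variable Ga : TreeAction T.
Notation V := (vert T).
Notation A := (adj T).
Notation G := (grp Ga).
Notation gi := (ginv T Ga).
Notation gm := (gmul T Ga).
Notation ac := (act Ga).

Lemma act_inv_l (g : G) x : ac (gi g) (ac g x) = x.
Proof. rewrite <- actM, gmulVl, act1. auto. Qed.

Lemma act_inj (g : G) x y : ac g x = ac g y -> x = y.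
Proof. intros H. rewrite <- (act_inv_l g x), <- (act_inv_l g y), H. auto. Qed.

Lemma act_inv_r (g : G) x : ac g (ac (gi g) x) = x.
Proof. apply (act_inj (gi g)). rewrite act_inv_l. auto. Qed.

Lemma act_path (g : G) f n : path T f n -> path T (fun i => ac g (f i)) n.
Proof. intros H i Hi. apply act_adj. apply H; auto. Qed.

Lemma dist_act_le (g : G) x y : dist (ac g x) (ac g y) <= dist x y.
Proof.
  destruct (dist_path T x y) as [f [F0 [Fn Fp]]].
  assert (H := dist_le_path T _ _ (act_path g f _ Fp)). simpl in H. rewrite F0, Fn in H. auto.
Qed.

Lemma dist_act (g : G) x y : dist (ac g x) (ac g y) = dist x y.
Proof.
  apply Nat.le_antisymm. apply dist_act_le.
  assert (H := dist_act_le (gi g) (ac g x) (ac g y)). rewrite !act_inv_l in H. exact H.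
Qed.

Lemma dist_inv (g : G) q : dist q (ac (gi g) q) = dist q (ac g q).
Proof.
  rewrite <- (dist_act g). rewrite act_inv_r. apply dist_sym.
Qed.

Lemma iso_adj (F : V -> V) : (forall x y, dist (F x) (F y) = dist x y) -> forall x y, A x y -> A (F x) (F y).
Proof. intros H x y Hxy. apply dist_adj. rewrite H. apply adj_dist; auto. Qed.

Definition hz (g : G) (k : Z) (x : V) : V :=
  if (0 <=? k)%Z then Nat.iter (Z.to_nat k) (ac g) x else Nat.iter (Z.to_nat (- k)) (ac (gi g)) x.

Lemma hz0 g x : hz g 0 x = x.
Proof. reflexivity. Qed.

Lemma hz_succ g k x : hz g (k + 1) x = ac g (hz g k x).
Proof.
  unfold hz. destruct (Z.leb_spec 0 k), (Z.leb_spec 0 (k + 1)); try lia.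
  - replace (Z.to_nat (k + 1)) with (S (Z.to_nat k)) by lia. reflexivity.
  - replace (Z.to_nat (k + 1)) with 0 by lia. replace (Z.to_nat (- k)) with 1 by lia.
    simpl. rewrite act_inv_r. auto.
  - replace (Z.to_nat (- k)) with (S (Z.to_nat (- (k + 1)))) by lia. simpl. rewrite act_inv_r. auto.
Qed.

Lemma hz_pred g k x : hz g (k - 1) x = ac (gi g) (hz g k x).
Proof.
  replace (hz g k x) with (hz g (k - 1 + 1) x) by (f_equal; lia).
  rewrite hz_succ, act_inv_l. auto.
Qed.

Lemma hz_add g k : forall l x, hz g (k + l) x = hz g k (hz g l x).
Proof.
  induction k using Z.peano_ind; intros l x.
  - rewrite Z.add_0_l, hz0; auto.
  - replace (Z.succ k + l)%Z with (k + l + 1)%Z by lia. rewrite <- (Z.add_1_r k).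
    rewrite !hz_succ, IHk. auto.
  - replace (Z.pred k + l)%Z with (k + l - 1)%Z by lia. rewrite <- (Z.sub_1_r k).
    rewrite !hz_pred, IHk. auto.
Qed.

Lemma hz1 g x : hz g 1 x = ac g x.
Proof. reflexivity. Qed.

Lemma hzm1 g x : hz g (-1) x = ac (gi g) x.
Proof. reflexivity. Qed.

Lemma iter_dist (e : G) n x y : dist (Nat.iter n (ac e) x) (Nat.iter n (ac e) y) = dist x y.
Proof. induction n; simpl; auto. rewrite dist_act; auto. Qed.

Lemma hz_dist g k x y : dist (hz g k x) (hz g k y) = dist x y.
Proof. unfold hz. destruct (0 <=? k)%Z; apply iter_dist. Qed.

Lemma hz_inj g k x y : hz g k x = hz g k y -> x = y.
Proof. intros H. apply dist_eq0. rewrite <- (hz_dist g k), H. apply dist_refl. Qed.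

Lemma tl_spec (p : V) (g : G) : (exists q, dist q (ac g q) = tl Ga g) /\ forall q, tl Ga g <= dist q (ac g q).
Proof.
  unfold tl. apply epsilon_spec.
  destruct (min_exists (fun t => exists q, dist q (ac g q) = t)) as [n [[q Hq] Hmin]].
  { exists (dist p (ac g p)), p; auto. }
  exists n. split. eauto. intros q'. apply Hmin. eauto.
Qed.

Definition iso (l : Z -> V) := forall m n, (m <= n)%Z -> dist (l m) (l n) = Z.to_nat (n - m).

Lemma line_iso (l : Z -> V) : (forall n, A (l n) (l (n + 1)%Z)) -> (forall n, l (n - 1)%Z <> l (n + 1)%Z) -> iso l.
Proof.
  intros Ha Hn m n Hmn.
  set (psi := fun i : nat => l (m + Z.of_nat i)%Z).
  assert (H := LG T psi (Z.to_nat (n - m))).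
  unfold psi in H. rewrite Z.add_0_r in H. replace (l n) with (l (m + Z.of_nat (Z.to_nat (n - m)))%Z) by (f_equal; lia).
  apply H; auto.
  - intros i Hi. replace (m + Z.of_nat (S i))%Z with (m + Z.of_nat i + 1)%Z by lia. apply Ha.
  - intros i Hi. replace (m + Z.of_nat i)%Z with (m + Z.of_nat i + 1 - 1)%Z by lia.
    replace (m + Z.of_nat (i + 2))%Z with (m + Z.of_nat i + 1 + 1)%Z by lia. apply Hn.
Qed.


Lemma line (f : G) (hf : hyperbolic Ga f) (p0 : V) :
  exists gam : Z -> V, (forall n, axis T Ga f (gam n)) /\ (forall p, axis T Ga f p -> exists n, gam n = p) /\
    (forall n, ac f (gam n) = gam (n + Z.of_nat (tl Ga f))%Z) /\ iso gam.
Proof.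
  destruct hf as [hf1 hf2].
  destruct (tl_spec p0 f) as [[q0 Hq0] Hmin].
  remember (tl Ga f) as tau eqn:Htau.
  assert (Htau1 : 1 <= tau).
  { destruct tau; [|lia]. exfalso. apply (hf1 q0). symmetry. apply dist_eq0; auto. }
  destruct (dist_geod T q0 (ac f q0)) as [sg [S0 [Sn Sg]]]. rewrite Hq0 in Sn, Sg.
  set (tz := Z.of_nat tau). assert (Htz : tz = Z.of_nat tau) by reflexivity. clearbody tz.
  set (gam := fun n => hz f (n / tz) (sg (Z.to_nat (n mod tz)))).
  assert (Hchar : forall q r, (0 <= r < tz)%Z -> gam (tz * q + r)%Z = hz f q (sg (Z.to_nat r))).
  { intros q r Hr. unfold gam.
    rewrite <- (Z.div_unique_pos _ _ q r Hr eq_refl), <- (Z.mod_unique_pos _ _ q r Hr eq_refl). auto. }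
  clearbody gam.
  assert (Hchar2 : forall q, gam (tz * q + tz)%Z = hz f q (sg tau)).
  { intros q. replace (tz*q+tz)%Z with (tz*(q+1) + 0)%Z by lia. rewrite Hchar by lia.
    rewrite hz_add, hz1. simpl (Z.to_nat 0). rewrite S0, Sn. auto. }
  assert (Hdec : forall n, exists q r, (0 <= r < tz)%Z /\ n = (tz*q + r)%Z).
  { intros n. exists (n / tz)%Z, (n mod tz)%Z. split. apply Z.mod_pos_bound; lia. apply Z.div_mod; lia. }
  assert (Hcharle : forall q r, (0 <= r <= tz)%Z -> gam (tz*q + r)%Z = hz f q (sg (Z.to_nat r))).
  { intros q r Hr. destruct (Z.eq_dec r tz) as [e|e].
    - rewrite e, Hchar2. f_equal. f_equal. lia.
    - apply Hchar; lia. }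
  assert (Hadj : forall n, A (gam n) (gam (n+1)%Z)).
  { intros n. destruct (Hdec n) as [q [r [Hr ->]]].
    replace (tz*q + r + 1)%Z with (tz*q + (r+1))%Z by lia. rewrite Hchar, Hcharle by lia.
    apply (iso_adj (hz f q)). intros; apply hz_dist.
    replace (Z.to_nat (r+1)) with (S (Z.to_nat r)) by lia. apply (proj1 Sg). lia. }
  assert (Hnb : forall n, gam (n-1)%Z <> gam (n+1)%Z).
  { intros n. destruct (Hdec n) as [q [r [Hr ->]]]. destruct (Z.eq_dec r 0) as [->|Hr0].
    - replace (tz*q + 0 - 1)%Z with (tz*(q-1) + (tz - 1))%Z by lia.
      replace (tz*q+0+1)%Z with (tz*q + 1)%Z by lia.
      rewrite Hchar, Hcharle by lia. replace (q-1)%Z with (q + -1)%Z by lia. rewrite hz_add, hzm1.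
      intros E. apply hz_inj in E.
      replace (Z.to_nat (tz - 1)) with (tau - 1) in E by lia. replace (Z.to_nat 1) with 1 in E by lia.
      assert (E' : sg (tau-1) = ac f (sg 1)). { rewrite <- E, act_inv_r; auto. }
      destruct (Nat.eq_dec tau 1) as [H1|H1].
      + apply hf2. exists (sg 0), (sg 1). split. apply (proj1 Sg); lia. split.
        * rewrite S0. rewrite H1 in Sn. auto.
        * rewrite <- E'. rewrite H1. auto.
      + assert (Hd := Hmin (sg 1)). rewrite <- E' in Hd.
        rewrite (geod_dist T sg tau Sg 1 (tau-1)) in Hd by lia. lia.
    - replace (tz*q + r - 1)%Z with (tz*q + (r-1))%Z by lia.
      replace (tz*q+r+1)%Z with (tz*q+(r+1))%Z by lia. rewrite Hchar, Hcharle by lia.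
      intros E. apply hz_inj in E. apply (geod_nb T sg tau Sg (Z.to_nat (r-1))). lia.
      replace (Z.to_nat (r-1) + 2) with (Z.to_nat (r+1)) by lia. auto. }
  assert (Hiso : iso gam) by (apply line_iso; auto).
  assert (Hsh : forall n, ac f (gam n) = gam (n + tz)%Z).
  { intros n. destruct (Hdec n) as [q [r [Hr ->]]].
    replace (tz*q + r + tz)%Z with (tz*(q+1) + r)%Z by lia. rewrite !Hchar by lia. rewrite hz_succ. auto. }
  assert (Hax : forall n, axis T Ga f (gam n)).
  { intros n. unfold axis. rewrite Hsh, Hiso by lia. rewrite <- Htau. lia. }
  exists gam. split; auto. split; [|split; auto; intros n; rewrite Hsh; f_equal; lia].
  intros p Hp. unfold axis in Hp. rewrite <- Htau in Hp.
  destruct (min_exists (fun k => exists n, dist p (gam n) = k)) as [m [[i Hi] Hm]]; [exists (dist p (gam 0%Z)), 0%Z; auto|].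
  destruct (Nat.eq_dec m 0). { exists i. symmetry. apply dist_eq0. lia. }
  exfalso.
  destruct (dist_geod T p (gam i)) as [Gp [G0 [Gm Gg]]]. rewrite Hi in Gm, Gg.
  set (Sx := fun t : nat => gam (i + Z.of_nat t)%Z).
  set (R := fun j => ac f (Gp (m - j))).
  assert (PS : path T Sx tau).
  { intros t Ht. unfold Sx. replace (i + Z.of_nat (S t))%Z with (i + Z.of_nat t + 1)%Z by lia. apply Hadj. }
  assert (NS : nb T Sx tau).
  { intros t Ht. unfold Sx. replace (i + Z.of_nat t)%Z with (i + Z.of_nat t + 1 - 1)%Z by lia.
    replace (i + Z.of_nat (t + 2))%Z with (i + Z.of_nat t + 1 + 1)%Z by lia. apply Hnb. }
  assert (GR : geod T R m).
  { split.
    - intros j Hj. unfold R. apply act_adj. apply adj_sym. replace (m - j) with (S (m - S j)) by lia.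
      apply (proj1 Gg); lia.
    - unfold R. rewrite dist_act, Nat.sub_0_r, Nat.sub_diag, dist_sym. apply Gg. }
  assert (Gpm1 : dist p (Gp (m - 1)) = m - 1).
  { rewrite <- G0. rewrite (geod_dist T Gp m Gg 0 (m-1)) by lia. lia. }
  assert (J1 : Gp m = Sx 0). { unfold Sx. rewrite Z.add_0_r. auto. }
  set (W1 := concat T Gp m Sx).
  assert (PW1 : path T W1 (m + tau)) by (apply path_concat; auto; apply Gg).
  assert (NW1 : nb T W1 (m + tau)).
  { apply nb_concat; auto. apply Gg. apply geod_nb; auto.
    intros _ _ E. unfold Sx in E. assert (H1 := Hm (dist p (gam (i + Z.of_nat 1)%Z)) ltac:(eauto)).
    rewrite <- E in H1. lia. }
  assert (J2 : W1 (m + tau) = R 0).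
  { unfold W1. rewrite concat_r by (auto; lia). unfold Sx, R. rewrite Nat.sub_0_r, Gm, Hsh.
    f_equal. lia. }
  set (W := concat T W1 (m + tau) R).
  assert (PW : path T W (m + tau + m)) by (apply path_concat; auto; apply GR).
  assert (NW : nb T W (m + tau + m)).
  { apply nb_concat; auto. apply GR. apply geod_nb; auto.
    intros _ _ E. unfold W1 in E. rewrite concat_r in E by (auto; lia). unfold Sx, R in E.
    replace (i + Z.of_nat (m + tau - 1 - m))%Z with (i - 1 + tz)%Z in E by lia.
    rewrite <- Hsh in E. assert (H1 := dist_act f p (Gp (m - 1))).
    replace (m - 1) with (m - 1) in H1 by lia. rewrite <- E, dist_act in H1.
    assert (H2 := Hm (dist p (gam (i - 1)%Z)) ltac:(eauto)). lia. }
  assert (HL := LG T W (m + tau + m) PW NW (m + tau + m) (le_n _)).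
  unfold W in HL. rewrite concat_l in HL by lia. rewrite concat_r in HL by (auto; lia).
  unfold W1 in HL. rewrite concat_l in HL by lia. unfold R in HL.
  replace (m - (m + tau + m - (m + tau))) with 0 in HL by lia. rewrite G0 in HL. lia.
Qed.


Lemma orient (f : G) (hf : hyperbolic Ga f) x y : axis T Ga f x -> axis T Ga f y ->
  exists (l : Z -> V) (e : G), (e = f \/ e = gi f) /\ (forall q, dist q (ac e q) = dist q (ac f q)) /\ l 0%Z = x /\
    l (Z.of_nat (dist x y)) = y /\ (forall n, axis T Ga f (l n)) /\
    (forall n, ac e (l n) = l (n + Z.of_nat (tl Ga f))%Z) /\ iso l.
Proof.
  intros Hx Hy. destruct (line f hf x) as [gam [Ax [Onto [Sh Iso]]]].
  destruct (Onto x Hx) as [a <-]. destruct (Onto y Hy) as [b <-].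
  destruct (Z.le_gt_cases a b).
  - exists (fun n => gam (a + n)%Z), f. split; auto. split; auto. split. rewrite Z.add_0_r; auto.
    split. rewrite Iso by lia. f_equal. lia. split; auto. split.
    + intros; rewrite Sh; f_equal; lia.
    + intros m n Hmn. rewrite Iso by lia. f_equal; lia.
  - exists (fun n => gam (a - n)%Z), (gi f). split; auto. split. apply dist_inv. split. rewrite Z.sub_0_r. auto.
    split. rewrite dist_sym, Iso by lia. f_equal; lia. split; auto. split.
    + intros n. apply (act_inj f). rewrite act_inv_r, Sh. f_equal; lia.
    + intros m n Hmn. rewrite dist_sym, Iso by lia. f_equal; lia.
Qed.

Lemma iso_geod (l : Z -> V) L : iso l -> geod T (fun i => l (Z.of_nat i)) L.
Proof.
  intros I. split.
  - intros i Hi. apply dist_adj. rewrite I by lia. lia.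
  - rewrite I by lia. lia.
Qed.

Lemma overlap (l1 l2 : Z -> V) (L : nat) : iso l1 -> iso l2 -> l1 0%Z = l2 0%Z ->
  l1 (Z.of_nat L) = l2 (Z.of_nat L) -> forall t, (0 <= t <= Z.of_nat L)%Z -> l1 t = l2 t.
Proof.
  intros I1 I2 E0 EL t Ht.
  assert (H := geod_unique T _ _ L (iso_geod l1 L I1) (iso_geod l2 L I2) E0 EL (Z.to_nat t) ltac:(lia)).
  simpl in H. rewrite Z2Nat.id in H by lia. auto.
Qed.

Lemma segment (l : Z -> V) (L : nat) z : iso l -> on_segment T (l 0%Z) (l (Z.of_nat L)) z ->
  z = l (Z.of_nat (dist (l 0%Z) z)) /\ dist (l 0%Z) z <= L.
Proof.
  intros I Hs. unfold on_segment in Hs. rewrite I in Hs by lia.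
  replace (Z.to_nat (Z.of_nat L - 0)) with L in Hs by lia.
  destruct (dist_geod T (l 0%Z) z) as [G1 [G10 [G1a G1g]]].
  destruct (dist_geod T z (l (Z.of_nat L))) as [G2 [G20 [G2b G2g]]].
  set (a := dist (l 0%Z) z) in *. set (b := dist z (l (Z.of_nat L))) in *.
  set (W := concat T G1 a G2).
  assert (PW : path T W L). { replace L with (a + b) by lia. apply path_concat; [apply G1g|apply G2g|congruence]. }
  assert (W0 : W 0 = l 0%Z). { unfold W. rewrite concat_l by lia. auto. }
  assert (WL : W L = l (Z.of_nat L)). { unfold W. rewrite concat_r by (congruence || lia). replace (L - a) with b by lia. auto. }
  assert (GW : geod T W L). { split; auto. rewrite W0, WL, I by lia. lia. }
  assert (H := geod_unique T W _ L GW (iso_geod l L I) W0 WL a ltac:(lia)).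
  unfold W in H. rewrite concat_l in H by lia. rewrite G1a in H. split; auto. lia.
Qed.

End Act.

Lemma real_aux (L tau t2 : nat) (lam : R) : (INR L > (lam + 2) * INR tau)%R -> (0 < lam)%R -> t2 <= tau ->
  tau + t2 <= L /\ (INR (L - tau - t2) > lam * INR tau)%R.
Proof.
  intros H Hl Ht. assert (P := pos_INR tau). assert (Q := le_INR _ _ Ht).
  assert (Hle : tau + t2 <= L).
  { destruct (le_lt_dec (tau + t2) L); auto. apply lt_INR in l. rewrite plus_INR in l.
    exfalso. assert (0 <= lam * INR tau)%R by (apply Rmult_le_pos; lra). nra. }
  split; auto. rewrite !minus_INR by lia. assert (0 <= lam * INR tau)%R by (apply Rmult_le_pos; lra). nra.
Qed.

Section Main.
Variable T : Tree.
Variable Ga : TreeAction T.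
Notation V := (vert T).
Notation A := (adj T).
Notation G := (grp Ga).
Notation gi := (ginv T Ga).
Notation gm := (gmul T Ga).
Notation ac := (act Ga).
Variable h : G.
Hypothesis hh : hyperbolic Ga h.
Variable lam : R.
Hypothesis hlam : (0 < lam)%R.
Notation tau := (tl Ga h).
Notation ax := (axis T Ga h).

Lemma fs_apply (HFS : FS Ga h lam) (l : Z -> V) (L' : nat) (k : G) : iso T l -> (forall n, ax (l n)) ->
  (INR L' > lam * INR tau)%R -> (forall t, (0 <= t <= Z.of_nat L')%Z -> ac k (l t) = l t) ->
  forall p, ax p -> ac k p = p.
Proof.
  intros I Ax HL Hfix. apply HFS. exists (l 0%Z), (l (Z.of_nat L')). split; auto. split; auto. split.
  - rewrite I by lia. replace (Z.to_nat (Z.of_nat L' - 0)) with L' by lia. auto.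
  - intros z Hz. destruct (segment T l L' z I Hz) as [Ez Hle]. rewrite Ez. apply Hfix. lia.
Qed.

Lemma ax_shift (eh : G) : (forall q, dist q (ac eh q) = dist q (ac h q)) -> forall q, ax q <-> dist q (ac eh q) = tau.
Proof. intros H q. unfold axis. rewrite H. tauto. Qed.

Lemma comm_axis (HFS : FS Ga h lam) (l1 l2 : Z -> V) (eh ef : G) (L t2 : nat) :
  (forall q, dist q (ac eh q) = dist q (ac h q)) -> iso T l1 -> (forall n, ax (l1 n)) ->
  (forall n, ac eh (l1 n) = l1 (n + Z.of_nat tau)%Z) -> (forall n, ac ef (l2 n) = l2 (n + Z.of_nat t2)%Z) ->
  (forall t, (0 <= t <= Z.of_nat L)%Z -> l1 t = l2 t) -> t2 <= tau -> (INR L > (lam + 2) * INR tau)%R ->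
  forall p, ax p -> ax (ac ef p).
Proof.
  intros SH I Ax Sh1 Sh2 O Ht2 HL.
  destruct (real_aux L tau t2 lam HL hlam Ht2) as [Hle HL'].
  set (k := gm (gi ef) (gm (gi eh) (gm ef eh))).
  assert (Hk : forall x, ac k x = ac (gi ef) (ac (gi eh) (ac ef (ac eh x)))).
  { intros; unfold k; rewrite !actM; auto. }
  assert (Hfix : forall p, ax p -> ac k p = p).
  { apply (fs_apply HFS l1 (L - tau - t2)); auto.
    intros t Ht. rewrite Hk. rewrite Sh1. rewrite O by lia. rewrite Sh2. rewrite <- O by lia.
    replace (t + Z.of_nat tau + Z.of_nat t2)%Z with (t + Z.of_nat t2 + Z.of_nat tau)%Z by lia.
    rewrite <- Sh1, act_inv_l. rewrite O by lia. rewrite <- Sh2, act_inv_l. rewrite O by lia. auto. }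
  intros p Hp. assert (Hkp := Hfix p Hp). rewrite Hk in Hkp.
  assert (E1 : ac (gi eh) (ac ef (ac eh p)) = ac ef p) by (apply (act_inj T Ga (gi ef)); rewrite Hkp, act_inv_l; auto).
  assert (E2 : ac ef (ac eh p) = ac eh (ac ef p)) by (apply (act_inj T Ga (gi eh)); rewrite E1, act_inv_l; auto).
  apply (ax_shift eh SH). rewrite <- E2, dist_act. apply (ax_shift eh SH). auto.
Qed.

Lemma comm_both (HFS : FS Ga h lam) (l1 l2 : Z -> V) (eh ef : G) (L t2 : nat) :
  (forall q, dist q (ac eh q) = dist q (ac h q)) -> iso T l1 -> (forall n, ax (l1 n)) ->
  (forall n, ac eh (l1 n) = l1 (n + Z.of_nat tau)%Z) -> (forall n, ac ef (l2 n) = l2 (n + Z.of_nat t2)%Z) ->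
  (forall t, (0 <= t <= Z.of_nat L)%Z -> l1 t = l2 t) -> t2 <= tau -> (INR L > (lam + 2) * INR tau)%R ->
  (forall p, ax p -> ax (ac ef p)) /\ (forall p, ax p -> ax (ac (gi ef) p)).
Proof.
  intros SH I Ax Sh1 Sh2 O Ht2 HL. split.
  - eapply comm_axis; eauto.
  - apply (comm_axis HFS (fun t => l1 (Z.of_nat L - t)%Z) (fun t => l2 (Z.of_nat L - t)%Z) (gi eh) (gi ef) L t2);
      auto.
    + intros q. rewrite dist_inv. auto.
    + intros m n Hmn. rewrite dist_sym, I by lia. f_equal. lia.
    + intros n. apply (act_inj T Ga eh). rewrite act_inv_r, Sh1. f_equal. lia.
    + intros n. apply (act_inj T Ga ef). rewrite act_inv_r, Sh2. f_equal. lia.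
    + intros t Ht. apply O. lia.
Qed.

Lemma ginv_ginv (g : G) x : ac (gi (gi g)) x = ac g x.
Proof. apply (act_inj T Ga (gi g)). rewrite act_inv_r, act_inv_l. auto. Qed.

Lemma AI_part (HFS : FS Ga h lam) : AI Ga h (lam + 2).
Proof.
  intros g hg Hle.
  destruct (classic (inter_length_le T (axis T Ga g) ax ((lam + 2) * INR tau))) as [H|H]; [left; auto|right].
  assert (Ex : exists x y, axis T Ga g x /\ ax x /\ axis T Ga g y /\ ax y /\ (INR (dist x y) > (lam + 2) * INR tau)%R).
  { apply NNPP; intro N; apply H; intros x y H1 H2 H3 H4. apply Rnot_lt_le; intro; apply N; exists x, y; auto. }
  destruct Ex as [x [y [Gx [Hx [Gy [Hy Hd]]]]]].
  destruct (orient T Ga h hh x y Hx Hy) as [l1 [eh [_ [SH [L10 [L1L [Ax1 [Sh1 I1]]]]]]]].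
  destruct (orient T Ga g hg x y Gx Gy) as [l2 [eg [Eg [_ [L20 [L2L [_ [Sh2 I2]]]]]]]].
  assert (O := overlap T l1 l2 (dist x y) I1 I2 ltac:(congruence) ltac:(congruence)).
  destruct (comm_both HFS l1 l2 eh eg (dist x y) (tl Ga g) SH I1 Ax1 Sh1 Sh2 O Hle Hd) as [C1 C2].
  intros p. destruct Eg as [->| ->]; split; intros Hp.
  - auto.
  - rewrite <- (act_inv_l T Ga g p). auto.
  - rewrite <- ginv_ginv. auto.
  - rewrite <- (act_inv_l T Ga g p). auto.
Qed.


Lemma ws_sub (HFS : FS Ga h lam) (g : G) x y : ax x -> translate_axis T Ga g h x -> ax y -> translate_axis T Ga g h y ->
  (INR (dist x y) > (lam + 2) * INR tau)%R -> forall p, ax p -> translate_axis T Ga g h p.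
Proof.
  intros Hx Tx Hy Ty Hd.
  set (f := gm g (gm h (gi g))).
  assert (Hf : forall q, ac f q = ac g (ac h (ac (gi g) q))) by (intros; unfold f; rewrite !actM; auto).
  assert (Hdf : forall q, dist q (ac f q) = dist (ac (gi g) q) (ac h (ac (gi g) q))).
  { intros q. rewrite <- (dist_act T Ga (gi g)). rewrite Hf, act_inv_l. auto. }
  assert (Htl : tl Ga f = tau).
  { destruct (tl_spec T Ga x f) as [[q1 Hq1] M1]. destruct (tl_spec T Ga x h) as [[q0 Hq0] M0].
    assert (H1 := M1 (ac g q0)). rewrite Hdf, act_inv_l in H1.
    assert (H2 := M0 (ac (gi g) q1)). rewrite <- Hdf in H2. lia. }
  assert (Fax : forall q, axis T Ga f q <-> ax (ac (gi g) q)).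
  { intros q. unfold axis. rewrite Hdf, Htl. tauto. }
  assert (hf : hyperbolic Ga f).
  { destruct hh as [h1 h2]. split.
    - intros q E. apply (h1 (ac (gi g) q)). rewrite <- E at 2. rewrite Hf, act_inv_l. auto.
    - intros [a [b [Hab [Ea Eb]]]]. apply h2. exists (ac (gi g) a), (ac (gi g) b). split.
      apply act_adj; auto. split.
      + rewrite <- Ea, Hf, act_inv_l. auto.
      + rewrite <- Eb, Hf, act_inv_l. auto. }
  assert (Tax : forall q, translate_axis T Ga g h q -> axis T Ga f q).
  { intros q [p [Hp ->]]. apply Fax. rewrite act_inv_l. auto. }
  destruct (orient T Ga h hh x y Hx Hy) as [l1 [eh [_ [SH [L10 [L1L [Ax1 [Sh1 I1]]]]]]]].
  destruct (orient T Ga f hf x y (Tax x Tx) (Tax y Ty)) as [l2 [ef [_ [SF [L20 [L2L [_ [Sh2 I2]]]]]]]].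
  assert (O := overlap T l1 l2 (dist x y) I1 I2 ltac:(congruence) ltac:(congruence)).
  rewrite Htl in Sh2.
  destruct (real_aux (dist x y) tau 0 lam Hd hlam ltac:(lia)) as [Hle HL'].
  rewrite Nat.sub_0_r in HL'.
  set (m := gm (gi eh) ef).
  assert (Hfix : forall p, ax p -> ac m p = p).
  { apply (fs_apply HFS l1 (dist x y - tau)); auto.
    intros t Ht. unfold m. rewrite actM. rewrite O by lia. rewrite Sh2. rewrite <- O by lia.
    rewrite <- Sh1, act_inv_l. apply O; lia. }
  intros p Hp. exists (ac (gi g) p). split; [|rewrite act_inv_r; auto].
  apply Fax. unfold axis. rewrite Htl. rewrite <- SF.
  assert (E : ac ef p = ac eh p).
  { apply (act_inj T Ga (gi eh)). rewrite act_inv_l. rewrite <- actM. apply Hfix; auto. }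
  rewrite E, SH. apply Hp.
Qed.

Lemma WS_part (HFS : FS Ga h lam) : WS Ga h (lam + 2).
Proof.
  intros g [x [y [Hx [Tx [Hy [Ty Hd]]]]]].
  assert (S1 := ws_sub HFS g x y Hx Tx Hy Ty Hd).
  assert (Tinv : forall q, translate_axis T Ga g h q -> ax (ac (gi g) q)).
  { intros q [p [Hp ->]]. rewrite act_inv_l. auto. }
  assert (Tinv2 : forall q, ax q -> translate_axis T Ga (gi g) h (ac (gi g) q)).
  { intros q Hq. exists q. auto. }
  assert (S2 := ws_sub HFS (gi g) (ac (gi g) x) (ac (gi g) y) (Tinv x Tx) (Tinv2 x Hx) (Tinv y Ty) (Tinv2 y Hy)
    ltac:(rewrite dist_act; auto)).
  intros p. split; intros Hp.
  - destruct (S2 p Hp) as [p' [Hp' E]]. rewrite E, act_inv_r. auto.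
  - destruct (S1 _ Hp) as [p'' [Hp'' E]]. apply act_inj in E. subst. auto.
Qed.

Lemma iso_abs (l : Z -> V) : iso T l -> forall m n, Z.of_nat (dist (l m) (l n)) = Z.abs (n - m).
Proof.
  intros I m n. destruct (Z.le_gt_cases m n).
  - rewrite I by lia. lia.
  - rewrite dist_sym, I by lia. lia.
Qed.

Lemma FS_part (HWS : WS Ga h lam) : FS Ga h lam.
Proof.
  intros g [x [y [Hx [Hy [Hd Hfix]]]]] p Hp.
  assert (gx : ac g x = x). { apply Hfix. unfold on_segment. rewrite dist_refl. auto. }
  assert (gy : ac g y = y). { apply Hfix. unfold on_segment. rewrite dist_refl. lia. }
  assert (HE : inE T Ga h g).
  { apply HWS. exists x, y. split; auto. split. exists x; auto. split; auto. split. exists y; auto. auto. }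
  assert (Hxy : x <> y).
  { intros ->. rewrite dist_refl in Hd. simpl in Hd. assert (0 <= lam * INR tau)%R.
    apply Rmult_le_pos; [lra|apply pos_INR]. lra. }
  destruct (line T Ga h hh x) as [gam [_ [Onto [_ I]]]].
  destruct (Onto x Hx) as [c Ec]. destruct (Onto y Hy) as [e Ee]. destruct (Onto p Hp) as [a Ea].
  destruct (Onto (ac g p) (proj1 (HE p) Hp)) as [b Eb].
  assert (D1 : dist (ac g p) x = dist p x) by (rewrite <- gx at 1; apply dist_act).
  assert (D2 : dist (ac g p) y = dist p y) by (rewrite <- gy at 1; apply dist_act).
  rewrite <- Eb, <- Ec, <- Ea in D1. rewrite <- Eb, <- Ee, <- Ea in D2.
  apply (f_equal Z.of_nat) in D1, D2. rewrite !(iso_abs gam I) in D1, D2.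
  assert (c <> e) by (intro; subst; auto).
  assert (a = b) by lia. subst. auto.
Qed.

End Main.

Open Scope R_scope.

Theorem mainTheorem12 (T : Tree) (Ga : TreeAction T) (h : grp Ga)
  (hh : hyperbolic Ga h) (lam : R) (hlam : 0 < lam) :
  (FS Ga h lam -> AI Ga h (lam + 2) /\ WS Ga h (lam + 2)) /\
  (WS Ga h lam -> FS Ga h lam).
Proof.
  split.
  - intros HFS. split. apply AI_part; auto. apply WS_part; auto.
  - apply FS_part; auto.
Qed.
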